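(* Let $G=(F\cup C,E)$ be a finite bipartite graph with $F\neq\emptyset$ and no isolated vertices. In one iteration of FacilitySelect on $G$, the expected number of edges removed is at least $\max\{|F|,\,|E|/|F|\}$.
   Context: Let $G=(F\cup C,E)$ be a finite bipartite graph with parts $F$ (facilities) and $C$ (clients). The facility graph $G_F=(F,E_F)$ has an edge $\{i,i'\}$ ($i\ne i'$) iff $i$ and $i'$ have a common neighbor in $G$. Write $\deg(\cdot)$, $N(\cdot)$ for degree/neighborhood in $G$, $\deg_F(\cdot)$, $N_F(\cdot)$ for those in $G_F$. One iteration of FacilitySelect: every $i\in F$ independently draws $r_i$ uniformly from $[0,1]$; let $I=\{i\in F: r_i>\max_{i'\in N_F(i)} r_{i'}\}$ (the maximum over the empty set being $-\infty$); then all vertices of $I\cup N(I)$ are deleted from $G$ together with all their incident edges. ''Clients removed'' are the clients in $N(I)$; ''edges removed'' are the edges incident to deleted vertices. FacilitySelect repeats iterations while $F\ne\emptyset$. *)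

(* Defs.v *)
From HB Require Import structures.
From mathcomp Require Import all_boot all_order all_algebra all_fingroup.
Set Implicit Arguments. Unset Strict Implicit. Unset Printing Implicit Defensive.
Import Order.TTheory GRing.Theory Num.Theory.

Section FS.
Variables (F C : finType) (adj : F -> C -> bool).

Definition edges : {set F * C} := [set e | adj e.1 e.2].

Definition nbrF (i : F) : {set C} := [set c | adj i c].
Definition nbrC (c : C) : {set F} := [set i | adj i c].

Definition fadj (i i' : F) : bool := (i != i') && [exists c, adj i c && adj i' c].
Definition nbrFF (i : F) : {set F} := [set i' | fadj i i'].

Definition no_isolated : Prop :=
  (forall i : F, exists c, adj i c) /\ (forall c : C, exists i, adj i c).

(* Since the r_i are i.i.d. continuous, ties have probability 0 and the
   relative order of the r_i is a uniformly random ranking of F. *)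
Definition rk (s : {perm F}) (i : F) : nat := enum_rank (s i).

Definition selected (s : {perm F}) : {set F} :=
  [set i | [forall i', (i' \in nbrFF i) ==> (rk s i' < rk s i)%N]].

Definition removed_clients (s : {perm F}) : {set C} :=
  [set c | [exists i, (i \in selected s) && adj i c]].

Definition removed_edges (s : {perm F}) : {set F * C} :=
  [set e in edges | (e.1 \in selected s) || (e.2 \in removed_clients s)].

Definition expected_removed_edges : rat :=
  ((\sum_(s : {perm F}) #|removed_edges s|)%:R / (#|F|`!)%:R)%R.

End FS.

(* Main.v *)
Require Import Defs.
From HB Require Import structures.
From mathcomp Require Import all_boot all_order all_algebra all_fingroup.
Import Order.TTheory GRing.Theory Num.Theory.

Section H.
Variables (F C : finType) (adj : F -> C -> bool).

Definition T (i : F) : {set F * C} := [set e | adj e.1 e.2 && adj i e.2].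
Definition K (i : F) : {set F} := i |: nbrFF adj i.

Lemma card_ind (X : finType) (A : {set X}) : #|A| = \sum_x (x \in A : nat).
Proof. by rewrite -sum1_card big_mkcond; apply: eq_bigr => x _; case: (x \in A). Qed.

Lemma rk_inj (s : {perm F}) : injective (rk s).
Proof. move=> x y /(ord_inj) /enum_rank_inj; exact: perm_inj. Qed.

Lemma fadj_sym i j : fadj adj i j = fadj adj j i.
Proof.
rewrite /fadj eq_sym; congr (_ && _); apply/existsP/existsP => -[c /andP[]]; by exists c; apply/andP.
Qed.

Lemma removed_ge s : (\sum_(i in selected adj s) #|T i| <= #|removed_edges adj s|)%N.
Proof.
under eq_bigr => i _ do rewrite card_ind.
rewrite exchange_big /= card_ind; apply: leq_sum => e _.
case: (boolP [exists i, (i \in selected adj s) && (e \in T i)]).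
- case/existsP => i0 /andP[si0 ei0].
  rewrite (bigD1 i0) //= ei0 big1 ?addn0.
  + move: ei0; rewrite !inE => /andP[a a0]; rewrite a /=.
    by rewrite lt0b; apply/orP; right; apply/existsP; exists i0; rewrite si0 a0.
  + move=> i /andP[si ne]; case ei: (e \in T i) => //.
    move: ei0 ei; rewrite !inE => /andP[_ a0] /andP[_ a1].
    have f1 : fadj adj i i0 by rewrite /fadj ne; apply/existsP; exists e.2; rewrite a1.
    move: si si0; rewrite !inE => /forallP/(_ i0) h1 /forallP/(_ i) h2.
    rewrite inE f1 /= in h1; rewrite inE fadj_sym f1 /= in h2.
    by move: (ltn_trans h1 h2); rewrite ltnn.
- rewrite negb_exists => /forallP h; rewrite big1 // => i si.
  by move: (h i); rewrite si /= => /negbTE ->.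
Qed.

Lemma T_ge_K i (c0 : C) : adj i c0 -> (#|K i| <= #|T i|)%N.
Proof.
move=> hc0.
pose f j := (j, odflt c0 [pick c | adj i c && adj j c]).
have fi : injective f by move=> x y /(congr1 fst).
rewrite -(card_imset (K i) fi); apply: subset_leq_card; apply/subsetP => e.
case/imsetP => j jK ->; rewrite !inE /=.
case: pickP => [c /andP[a1 a2] | h] /=; first by rewrite a1 a2.
move: jK; rewrite !inE => /orP[/eqP -> | ]; first by rewrite hc0.
rewrite /fadj => /andP[_ /existsP[c /andP[a1 a2]]].
by move: (h c); rewrite a1 a2.
Qed.

Lemma T_ge_deg i : (#|nbrF adj i| <= #|T i|)%N.
Proof.
have fi : injective (fun c : C => (i, c)) by move=> x y [].
rewrite -(card_imset (nbrF adj i) fi); apply: subset_leq_card; apply/subsetP => e.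
by case/imsetP => c; rewrite !inE => a ->; rewrite /= a.
Qed.

Lemma edges_sum : #|edges adj| = \sum_i #|nbrF adj i|.
Proof.
rewrite card_ind.
under [RHS]eq_bigr => i _ do rewrite card_ind.
rewrite pair_big /=; apply: eq_bigr => -[i c] _; by rewrite !inE.
Qed.

Definition P (A : {set F}) (j : F) : {set {perm F}} :=
  [set s | [forall x, ((x \in A) && (x != j)) ==> (rk s x < rk s j)%N]].

Lemma P_le (A : {set F}) a b : a \in A -> b \in A -> (#|P A a| <= #|P A b|)%N.
Proof.
move=> aA bA.
rewrite -(card_imset (P A a) (mulgI (tperm a b))); apply: subset_leq_card.
apply/subsetP => s' /imsetP[s sP ->]; rewrite inE; apply/forallP => x.
apply/implyP => /andP[xA xb].
have rkE y : rk (tperm a b * s) y = rk s (tperm a b y) by rewrite /rk permM.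
rewrite !rkE tpermR.
move: sP; rewrite inE => /forallP/(_ (tperm a b x)) H; apply: (implyP H); case: tpermP => [xe | xe | /eqP xa /eqP _].
- rewrite bA /=; apply/negP => /eqP ba; by move: xb; rewrite xe ba eqxx.
- by move: xb; rewrite xe eqxx.
- by rewrite xA xa.
Qed.

Lemma P_cover (A : {set F}) i : i \in A -> (#|{perm F}| <= \sum_(j in A) #|P A j|)%N.
Proof.
move=> iA; rewrite -sum1_card.
under [X in (_ <= X)%N]eq_bigr => j _ do rewrite card_ind.
rewrite exchange_big /=; apply: leq_sum => s _.
case: (arg_maxnP (rk s) iA) => j jA jmax.
rewrite (bigD1 j) //= ltn_addr // lt0b inE; apply/forallP => x.
apply/implyP => /andP[xA xj].
have jx : (rk s x <= rk s j)%N by exact: jmax.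
rewrite ltn_neqAle jx andbT.
by apply/negP => /eqP /rk_inj /eqP; rewrite (negbTE xj).
Qed.

Lemma count_sel i : (#|{perm F}| <= #|K i| * #|[set s : {perm F} | i \in selected adj s]|)%N.
Proof.
have iK : i \in K i by rewrite !inE eqxx.
have -> : [set s : {perm F} | i \in selected adj s] = P (K i) i.
  apply/setP => s; rewrite !inE; apply/forallP/forallP => h x.
  - apply/implyP => /andP[]; rewrite !inE => /orP[/eqP -> | xn]; first by rewrite eqxx.
    by move=> _; move: (h x); rewrite inE xn.
  - apply/implyP => xn; apply: (implyP (h x)); rewrite /K in_setU1 xn orbT /=.
    by move: xn; rewrite inE /fadj eq_sym => /andP[].
apply: (leq_trans (@P_cover _ _ iK)).
rewrite -sum_nat_const; apply: leq_sum => j jK; exact: P_le.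
Qed.

Definition cs i := #|[set s : {perm F} | i \in selected adj s]|.
Definition Esum := \sum_(s : {perm F}) #|removed_edges adj s|.

Lemma core : (\sum_i #|T i| * cs i <= Esum)%N.
Proof.
apply: (@leq_trans (\sum_(s : {perm F}) \sum_(i in selected adj s) #|T i|)); last first.
  by apply: leq_sum => s _; exact: removed_ge.
rewrite leq_eqVlt; apply/orP; left; apply/eqP.
under [RHS]eq_bigr => s _ do rewrite big_mkcond /=.
rewrite exchange_big /=; apply: eq_bigr => i _.
rewrite /cs card_ind big_distrr /=; apply: eq_bigr => s _.
by rewrite inE; case: (i \in selected adj s); rewrite ?muln1 ?muln0.
Qed.

Lemma main1 : no_isolated adj -> (#|F| * #|{perm F}| <= Esum)%N.
Proof.
case=> hF _; apply: leq_trans (core).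
rewrite -sum_nat_const; apply: leq_sum => i _.
apply: (leq_trans (count_sel i)); apply: leq_mul => //.
have [c hc] := hF i. apply: (@T_ge_K i c). exact: hc.
Qed.

Lemma main2 : (#|edges adj| * #|{perm F}| <= #|F| * Esum)%N.
Proof.
apply: (@leq_trans (#|F| * \sum_i #|T i| * cs i)); last by rewrite leq_mul2l core orbT.
rewrite edges_sum big_distrl big_distrr /=; apply: leq_sum => i _.
apply: (leq_trans (leq_mul (leqnn _) (count_sel i))).
rewrite mulnA [X in (_ <= X)%N]mulnA leq_mul2r; apply/orP; right.
by rewrite mulnC leq_mul // ?T_ge_deg // max_card.
Qed.

Lemma card_permF : #|{perm F}| = #|F|`!.
Proof.
rewrite -cardsT -card_perm; apply: eq_card => s.
rewrite !inE; symmetry; apply/subsetP => x _; by rewrite inE.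
Qed.
End H.

Theorem lemma4 (F C : finType) (adj : F -> C -> bool) :
  (0 < #|F|)%N ->
  no_isolated adj ->
  (Num.max (#|F|%:R : rat) (#|edges adj|%:R / #|F|%:R) <= expected_removed_edges adj)%R.
Proof.
move=> hF hni.
have m1 := @main1 F C adj hni. have m2 := @main2 F C adj.
rewrite /expected_removed_edges -card_permF.
have hN : (0 < #|{perm F}|)%N by rewrite card_permF fact_gt0.
rewrite ge_max; apply/andP; split.
  by rewrite ler_pdivlMr ?ltr0n // -natrM ler_nat.
rewrite ler_pdivlMr ?ltr0n // mulrAC ler_pdivrMr ?ltr0n // -!natrM ler_nat.
by rewrite [X in (_ <= X)%N]mulnC; exact: m2.
Qed.
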